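(* Let $G$ be a simple graph, $k\ge 1$, and let $D$ be a $k$-optimal set in $G$. Then $G$ has a subgraph $M$ of maximum degree at most $k$ such that $d_M(v) = k$ for all $v \in V(G)-D$.
   Context: A vertex set $D$ is $k$-dependent if $G[D]$ has maximum degree at most $k-1$. For $D\subseteq V(G)$, $\phi_k(D)=k|D|-|E(G[D])|$ and $\phi_k(G)=\max_{D\subseteq V(G)}\phi_k(D)$. A $k$-optimal set is a $k$-dependent set $D$ with $\phi_k(D)=\phi_k(G)$. $d_M(v)$ is the degree of $v$ in $M$. *)

(* Defs.v *)
From mathcomp Require Import all_boot all_order all_algebra.
Set Implicit Arguments. Unset Strict Implicit. Unset Printing Implicit Defensive.
Import GRing.Theory Num.Theory.

Definition simple_graph (V : finType) (e : rel V) : Prop :=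
  symmetric e /\ irreflexive e.

Definition deg_in (V : finType) (e : rel V) (D : {set V}) (v : V) : nat :=
  #|[set u in D | e v u]|.

Definition deg (V : finType) (e : rel V) (v : V) : nat :=
  #|[set u | e v u]|.

Definition induced_edges (V : finType) (e : rel V) (D : {set V}) : {set {set V}} :=
  [set E : {set V} | E \subset D &
     [exists x : V, exists y : V, e x y && (E == [set x; y])]].

Definition phi (V : finType) (e : rel V) (k : nat) (D : {set V}) : int :=
  (k * #|D|)%:Z - (#|induced_edges e D|)%:Z.

Definition k_dependent (V : finType) (e : rel V) (k : nat) (D : {set V}) : Prop :=
  forall v, v \in D -> deg_in e D v <= k.-1.

Definition k_optimal (V : finType) (e : rel V) (k : nat) (D : {set V}) : Prop :=
  k_dependent e k D /\ forall D' : {set V}, (phi e k D' <= phi e k D)%R.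

Definition subgraph (V : finType) (m e : rel V) : Prop :=
  symmetric m /\ subrel m e.

(* Main.v *)
Require Import Defs.
From mathcomp Require Import all_boot all_order all_algebra.
From mathcomp Require Import zify.
Set Implicit Arguments. Unset Strict Implicit. Unset Printing Implicit Defensive.

Definition FF (V : finType) (f : V -> nat) (X : {set V}) : nat :=
  \sum_(x : V) ((x \in X) * f x).
Definition E2 (V : finType) (e : rel V) (X : {set V}) : nat :=
  \sum_(x : V) \sum_(y : V) ((x \in X) && (y \in X) && e x y : nat).
Definition remE (V : finType) (e : rel V) (a b : V) : rel V :=
  fun x y => e x y && ~~ (((x == a) && (y == b)) || ((x == b) && (y == a))).
Definition decf (V : finType) (f : V -> nat) (a : V) : V -> nat :=
  fun x => f x - (x == a).
Definition addE (V : finType) (m : rel V) (a b : V) : rel V :=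
  fun x y => m x y || ((x == a) && (y == b)) || ((x == b) && (y == a)).
Definition good (V : finType) (e : rel V) (f : V -> nat) (D : {set V}) :=
  forall X, 2 * FF f X + E2 e D <= 2 * FF f D + E2 e X.
Definition sol (V : finType) (e : rel V) (f : V -> nat) (D : {set V}) :=
  exists m : rel V, symmetric m /\ subrel m e /\ (forall v, deg m v <= f v) /\
    (forall v, v \notin D -> deg m v = f v).

Lemma sum_eq1 (V : finType) (a : V) (G : V -> nat) :
  \sum_(x : V) ((x == a) * G x) = G a.
Proof.
rewrite (bigD1 a) //= eqxx mul1n big1 ?addn0 // => x /negbTE ->; by rewrite mul0n.
Qed.

Lemma deg_in_sum (V : finType) (e : rel V) (Y : {set V}) (v : V) :
  deg_in e Y v = \sum_(u : V) ((u \in Y) && e v u : nat).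
Proof.
rewrite /deg_in -sum1_card big_mkcond /=; apply: eq_bigr => u _.
by rewrite inE; case: (_ && _).
Qed.

Lemma FF_add (V : finType) (f : V -> nat) (v : V) (Y : {set V}) : v \notin Y ->
  FF f (v |: Y) = f v + FF f Y.
Proof.
move=> vY; rewrite /FF (bigD1 v) //= setU11 mul1n; congr (_ + _).
rewrite [RHS](bigD1 v) //= (negbTE vY) mul0n add0n.
apply: eq_bigr => x xv; by rewrite in_setU1 (negbTE xv).
Qed.

Lemma E2_add (V : finType) (e : rel V) (v : V) (Y : {set V}) : symmetric e -> irreflexive e ->
  v \notin Y -> E2 e (v |: Y) = E2 e Y + 2 * deg_in e Y v.
Proof.
move=> sy ir vY.
have pw : forall x y, ((x \in v |: Y) && (y \in v |: Y) && e x y : nat) =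
   ((x \in Y) && (y \in Y) && e x y : nat) + (x == v) * ((y \in Y) && e v y)
   + (y == v) * ((x \in Y) && e v x).
  move=> x y; rewrite !in_setU1.
  case: (eqVneq x v) => [->|xv]; case: (eqVneq y v) => [->|yv] /=.
  - by rewrite ir (negbTE vY).
  - rewrite (negbTE vY) /=; lia.
  - rewrite (negbTE vY) /= (sy x v); lia.
  - rewrite /= !addn0; lia.
rewrite /E2 deg_in_sum.
under eq_bigr => x _ do (under eq_bigr => y _ do rewrite pw; rewrite !big_split /=).
rewrite !big_split /=.
have h2 : \sum_(i : V) \sum_(i0 : V) (i == v) * ((i0 \in Y) && e v i0 : nat) = \sum_(u : V) ((u \in Y) && e v u : nat).
  under eq_bigr => i _ do rewrite -big_distrr /=.
  exact: (sum_eq1 v (fun _ => \sum_(u : V) ((u \in Y) && e v u : nat))).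
rewrite -!addnA; congr (_ + _).
rewrite [X in _ + X]exchange_big /=.
under eq_bigr => i _ do rewrite -big_distrr /=.
by rewrite (sum_eq1 v (fun=> \sum_(u:V) ((u \in Y) && e v u : nat))); lia.
Qed.

Lemma sum_eq1c (V : finType) (a : V) (c : nat) : \sum_(x : V) ((x == a) * c) = c.
Proof. exact: (sum_eq1 a (fun=> c)). Qed.

Lemma E2_rem (V : finType) (e : rel V) (a b : V) (X : {set V}) : symmetric e -> e a b -> a != b ->
  E2 e X = E2 (remE e a b) X + 2 * ((a \in X) && (b \in X)).
Proof.
move=> sy eab ab.
have pw : forall x y, ((x \in X) && (y \in X) && e x y : nat) =
   ((x \in X) && (y \in X) && remE e a b x y : nat) +
   (x == a) * ((y == b) * ((a \in X) && (b \in X))) +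
   (x == b) * ((y == a) * ((a \in X) && (b \in X))).
  move=> x y; rewrite /remE.
  case: (eqVneq x a) => [->|xa]; case: (eqVneq y b) => [->|yb];
  case: (eqVneq x b) => [xb|xb]; case: (eqVneq y a) => [ya|ya] /=;
  rewrite ?eab ?(sy b a) ?eab //=; try (subst; by rewrite eqxx in ab); try lia.
  all: try (subst; rewrite ?eab ?(sy b a) ?eab //=; lia).
rewrite /E2.
under eq_bigr => x _ do (under eq_bigr => y _ do rewrite pw; rewrite !big_split /=).
rewrite !big_split /=.
under [X in _ + X + _]eq_bigr => i _ do rewrite -big_distrr /=.
under [X in _ + _ + X]eq_bigr => i _ do rewrite -big_distrr /=.
set c := nat_of_bool _.
rewrite (sum_eq1c b c) (sum_eq1c a c).
rewrite sum_eq1c; lia.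
Qed.


Lemma FF_dec (V : finType) (f : V -> nat) (a : V) (X : {set V}) : 0 < f a ->
  FF f X = FF (decf f a) X + (a \in X).
Proof.
move=> fa; rewrite /FF /decf.
have pw : forall x, (x \in X) * f x = (x \in X) * (f x - (x == a)) + (x == a) * (a \in X).
  move=> x; case: (eqVneq x a) => [->|xa] /=; last by rewrite subn0 addn0.
  case: (a \in X) => /=; lia.
under eq_bigr => x _ do rewrite pw.
by rewrite big_split /= (sum_eq1c a (a \in X)).
Qed.

Lemma remE_sym (V : finType) (e : rel V) a b : symmetric e -> symmetric (remE e a b).
Proof.
move=> sy x y; rewrite /remE sy; congr (_ && ~~ _).
by case: (x == a); case: (y == b); case: (x == b); case: (y == a).
Qed.

Lemma remE_irr (V : finType) (e : rel V) a b : irreflexive e -> irreflexive (remE e a b).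
Proof. by move=> ir x; rewrite /remE ir. Qed.

Lemma remE_sub (V : finType) (e : rel V) a b : subrel (remE e a b) e.
Proof. by move=> x y /andP[]. Qed.

Lemma remE_ab (V : finType) (e : rel V) a b : remE e a b a b = false.
Proof. by rewrite /remE !eqxx /= andbF. Qed.

Lemma deg_addE (V : finType) (m : rel V) (a b : V) (v : V) : symmetric m -> m a b = false -> a != b ->
  deg (addE m a b) v = deg m v + (v == a) + (v == b).
Proof.
move=> sy mab ab; rewrite /deg.
case: (eqVneq v a) => [->|va].
  have -> : [set u | addE m a b a u] = b |: [set u | m a u].
    by apply/setP => u; rewrite /addE !inE eqxx (negbTE ab) /=; case: (m a u); case: (u == b).
  by rewrite cardsU1 inE mab (negbTE ab) /=; lia.
case: (eqVneq v b) => [->|vb].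
  have -> : [set u | addE m a b b u] = a |: [set u | m b u].
    by apply/setP => u; rewrite /addE !inE eqxx eq_sym (negbTE ab) /=; case: (m b u); case: (u == a).
  by rewrite cardsU1 inE sy mab /=; lia.
have -> : [set u | addE m a b v u] = [set u | m v u].
  by apply/setP => u; rewrite /addE !inE (negbTE va) (negbTE vb) /=; case: (m v u).
lia.
Qed.

Lemma E2_bridge (V : finType) (e : rel V) (X : {set V}) : symmetric e -> irreflexive e ->
  E2 e X = 2 * #|induced_edges e X|.
Proof.
move=> sy ir.
pose P := [set p : V * V | (p.1 \in X) && (p.2 \in X) && e p.1 p.2].
have -> : E2 e X = #|P|.
  rewrite /E2 pair_bigA /= -sum1_card [RHS]big_mkcond /=; apply: eq_bigr => p _.
  by rewrite inE; case: (_ && _).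
rewrite -sum1_card (partition_big (fun p : V * V => [set p.1; p.2]) (fun E => E \in induced_edges e X)).
  rewrite -[2 * _]mulnC -sum_nat_const; apply: eq_bigr => E.
  rewrite inE => /andP[sEX /existsP[x /existsP[y /andP[exy /eqP EE]]]].
  have xy : x != y by apply: contraTneq exy => ->; rewrite ir.
  have xX : x \in X by apply: (subsetP sEX); rewrite EE set21.
  have yX : y \in X by apply: (subsetP sEX); rewrite EE set22.
  rewrite sum1dep_card.
  have -> : [set p : V * V | (p \in P) && ([set p.1; p.2] == E)] = [set (x, y); (y, x)].
    apply/setP => [[p1 p2]]; rewrite !inE /= EE !xpair_eqE.
    apply/idP/idP.
    - move=> /andP[/andP[/andP[h1 h2] hp] /eqP hs].
      have p12 : p1 != p2 by apply: contraTneq hp => ->; rewrite ir.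
      have : p1 \in [set x; y] by rewrite -hs set21.
      have : p2 \in [set x; y] by rewrite -hs set22.
      rewrite !inE => /orP[]/eqP e2 /orP[]/eqP e1;
        rewrite e1 e2 ?eqxx ?andbT ?orbT //=;
        by move: p12; rewrite e1 e2 eqxx.
    - move=> /orP[]/andP[/eqP-> /eqP->]; rewrite xX yX ?exy ?(sy y x) ?exy //=.
      by rewrite setUC.
  by rewrite cards2 xpair_eqE negb_and xy.
move=> [p1 p2]; rewrite !inE /= => /andP[/andP[h1 h2] hp].
apply/andP; split.
  by apply/subsetP => z; rewrite !inE => /orP[]/eqP->.
by apply/existsP; exists p1; apply/existsP; exists p2; rewrite hp eqxx.
Qed.

Lemma good_del (V : finType) (e : rel V) (f : V -> nat) (D : {set V}) (a b : V) :
  symmetric e -> irreflexive e -> e a b -> a != b -> good e f D ->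
  ((a \in D) && (b \in D) \/ (f a = 0 /\ ~~ ((a \in D) && (b \in D)))) ->
  good (remE e a b) f D.
Proof.
move=> sy ir eab ab g [abD | [fa0 nabD]] X.
  have := g X; rewrite (E2_rem D sy eab ab) (E2_rem X sy eab ab) abD.
  case: (_ && _) => /=; lia.
have g1 := g X; rewrite (E2_rem D sy eab ab) (E2_rem X sy eab ab) (negbTE nabD) in g1.
case abX: ((a \in X) && (b \in X)); last by move: g1; rewrite abX /=; lia.
move/andP: abX => [aX bX].
have aXa : a \notin X :\ a by rewrite !inE eqxx.
have g2 := g (X :\ a).
have eX : X = a |: (X :\ a) by rewrite setD1K.
have h3 := E2_rem X sy eab ab; rewrite aX bX /= in h3.
have hF : FF f X = FF f (X :\ a) by rewrite {1}eX (FF_add f aXa) fa0.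
have hE : E2 e X = E2 e (X :\ a) + 2 * deg_in e (X :\ a) a by rewrite {1}eX (E2_add sy ir aXa).
have : 0 < deg_in e (X :\ a) a.
  rewrite /deg_in card_gt0; apply/set0Pn; exists b.
  by rewrite !inE eab bX eq_sym ab.
have hD := E2_rem D sy eab ab; rewrite (negbTE nabD) /= in hD.
move: g1; rewrite aX bX /=. lia.
Qed.

Lemma sol_del (V : finType) (e : rel V) (f : V -> nat) (D : {set V}) (a b : V) :
  sol (remE e a b) f D -> sol e f D.
Proof.
move=> [m [sm [sub [h1 h2]]]]; exists m; split=> //; split=> //.
by move=> x y /sub /remE_sub.
Qed.

Lemma good_use (V : finType) (e : rel V) (f : V -> nat) (D : {set V}) (a b : V) :
  symmetric e -> irreflexive e -> e a b -> a != b -> 0 < f a -> 0 < f b ->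
  a \notin D ->
  (b \in D -> forall X, 2 * FF f X + E2 e D = 2 * FF f D + E2 e X -> (a \in X) || (b \in X)) ->
  good e f D -> good (remE e a b) (decf (decf f a) b) D.
Proof.
move=> sy ir eab ab fa fb aD tight g X.
have fb' : 0 < decf f a b by rewrite /decf eq_sym (negbTE ab) subn0.
have FX : forall Y, FF f Y = FF (decf (decf f a) b) Y + (a \in Y) + (b \in Y).
  by move=> Y; rewrite (FF_dec Y fa) (FF_dec Y fb'); lia.
have gX := g X.
have hX := E2_rem X sy eab ab; have hD := E2_rem D sy eab ab.
have fX := FX X; have fD := FX D.
have [h hh] : exists h, E2 (remE e a b) X = 2 * h.
  exists #|induced_edges (remE e a b) X|; apply: E2_bridge; [exact: remE_sym | exact: remE_irr].
have [h' hh'] : exists h, E2 (remE e a b) D = 2 * h.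
  exists #|induced_edges (remE e a b) D|; apply: E2_bridge; [exact: remE_sym | exact: remE_irr].
rewrite (negbTE aD) /= in fD hD.
case bD: (b \in D); rewrite bD /= in fD hD.
  have tX := tight bD X.
  case aX: (a \in X); case bX: (b \in X); rewrite aX bX /= in hX fX tX; try lia.
case aX: (a \in X); case bX: (b \in X); rewrite aX bX /= in hX fX; lia.
Qed.

Lemma sol_use (V : finType) (e : rel V) (f : V -> nat) (D : {set V}) (a b : V) :
  symmetric e -> e a b -> a != b -> 0 < f a -> 0 < f b ->
  sol (remE e a b) (decf (decf f a) b) D -> sol e f D.
Proof.
move=> sy eab ab fa fb [m [sm [sub [h1 h2]]]].
have mab : m a b = false by apply/negP => /sub; rewrite remE_ab.
exists (addE m a b); split.
  move=> x y; rewrite /addE sm.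
  by case: (x == a); case: (y == b); case: (x == b); case: (y == a); case: (m y x).
split.
  move=> x y; rewrite /addE => /orP[/orP[/sub/remE_sub //|]|] /andP[/eqP-> /eqP->] //.
  by rewrite sy.
have dv : forall v, decf (decf f a) b v = f v - (v == a) - (v == b) by [].
have ba : (b == a) = false by rewrite eq_sym (negbTE ab).
split=> v; rewrite (deg_addE v sm mab ab).
  have := h1 v; rewrite dv.
  have [->|va] := eqVneq v a; first by rewrite ?eqxx (negbTE ab) /=; lia.
  have [->|vb] := eqVneq v b; first by rewrite ?eqxx ?ba ?(negbTE va) /=; lia.
  rewrite ?(negbTE va) ?(negbTE vb) /=; lia.
move=> vD; have := h2 v vD; rewrite dv.
have [->|va] := eqVneq v a; first by rewrite ?eqxx (negbTE ab) /=; lia.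
have [->|vb] := eqVneq v b; first by rewrite ?eqxx ?ba ?(negbTE va) /=; lia.
rewrite ?(negbTE va) ?(negbTE vb) /=; lia.
Qed.

Lemma sol_noedge (V : finType) (e : rel V) (f : V -> nat) (D : {set V}) :
  symmetric e -> irreflexive e -> (forall x y, e x y = false) -> good e f D -> sol e f D.
Proof.
move=> sy ir e0 g; exists (fun _ _ => false).
have d0 : forall v : V, deg (fun _ _ : V => false) v = 0.
  move=> v; rewrite /deg.
  have -> : [set u : V | false] = set0 by apply/setP => u; rewrite !inE.
  by rewrite cards0.
split; first by [].
split; first by move=> x y.
split; first by move=> v; rewrite d0.
move=> v vD; rewrite d0.
have := g (v |: D); rewrite (FF_add f vD) (E2_add sy ir vD) deg_in_sum.
rewrite big1 ?muln0 ?addn0; first lia.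
by move=> u _; rewrite e0 andbF.
Qed.

Definition mix1 (V : finType) (D I X : {set V}) : {set V} :=
  ((I :|: X) :\: D) :|: (I :&: X :&: D).
Definition mix2 (V : finType) (D I X : {set V}) : {set V} :=
  ((I :&: X) :\: D) :|: ((I :|: X) :&: D).

Lemma FF_mix (V : finType) (f : V -> nat) (D I X : {set V}) :
  FF f (mix1 D I X) + FF f (mix2 D I X) = FF f I + FF f X.
Proof.
rewrite /FF -!big_split; apply: eq_bigr => x _; rewrite /mix1 /mix2 !inE.
case: (x \in D); case: (x \in I); case: (x \in X) => /=; lia.
Qed.

Lemma E2_mix (V : finType) (e : rel V) (D I X : {set V}) :
  (forall x y, e x y -> x \in D -> y \in D -> False) ->
  (forall x y, e x y -> x \notin D -> y \notin D -> False) ->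
  E2 e (mix1 D I X) + E2 e (mix2 D I X) <= E2 e I + E2 e X.
Proof.
move=> hB hC.
rewrite /E2 -!big_split; apply: leq_sum => x _; rewrite -!big_split; apply: leq_sum => y _.
case exy: (e x y); last by rewrite !andbF.
rewrite /mix1 /mix2 !inE !andbT.
case xD: (x \in D); case yD: (y \in D).
- by exfalso; apply: (hB x y); rewrite ?exy ?xD ?yD.
- by case: (x \in I); case: (x \in X); case: (y \in I); case: (y \in X).
- by case: (x \in I); case: (x \in X); case: (y \in I); case: (y \in X).
- by exfalso; apply: (hC x y); rewrite ?exy ?xD ?yD.
Qed.

Lemma keyE (V : finType) (e : rel V) (f : V -> nat) (D : {set V}) (a b0 : V) :
  symmetric e -> irreflexive e -> good e f D ->
  (forall x y, e x y -> x \in D -> y \in D -> False) ->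
  (forall x y, e x y -> x \notin D -> y \notin D -> False) ->
  0 < f a -> a \notin D -> e a b0 ->
  exists b, [/\ e a b, b \in D &
    forall X, 2 * FF f X + E2 e D = 2 * FF f D + E2 e X -> (a \in X) || (b \in X)].
Proof.
move=> sy ir g hB hC fa aD eab0.
have inD : forall b, e a b -> b \in D.
  by move=> b eab; apply/negPn/negP => bD; exact: (hC a b).
case: (boolP [exists X : {set V}, (2 * FF f X + E2 e D == 2 * FF f D + E2 e X) && (a \notin X)]) => [ex|nex]; last first.
  exists b0; split; [done | exact: inD |].
  move=> X tX; case aX: (a \in X) => //=; exfalso; move/negP: nex; apply.
  by apply/existsP; exists X; rewrite tX eqxx aX.
pose P := fun k => [exists X : {set V}, [&& (2 * FF f X + E2 e D == 2 * FF f D + E2 e X), a \notin X & #|X :&: D| == k]].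
have exP : exists k, P k.
  move/existsP: ex => [X /andP[tX aX]]; exists #|X :&: D|; apply/existsP; exists X.
  by rewrite tX aX eqxx.
case: (ex_minnP exP) => k0 /existsP[I /and3P[/eqP tI aI /eqP kI]] kmin.
have aI' : a \notin I by [].
have : f a <= deg_in e I a.
  have := g (a |: I); rewrite (FF_add f aI') (E2_add sy ir aI'); lia.
move=> fdeg.
have : 0 < deg_in e I a by lia.
rewrite /deg_in card_gt0 => /set0Pn[b]; rewrite !inE => /andP[bI eab].
have bD := inD b eab.
exists b; split=> // X tX.
apply/negPn/negP; rewrite negb_or => /andP[aX bX].
pose M1 := mix1 D I X; pose M2 := mix2 D I X.
have hF := FF_mix f D I X; have hE := E2_mix I X hB hC.
have g1 := g M1; have g2 := g M2.
have tM1 : 2 * FF f M1 + E2 e D == 2 * FF f D + E2 e M1.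
  rewrite -/M1 -/M2 in hF hE; apply/eqP; lia.
have aM1 : a \notin M1 by rewrite /M1 /mix1 !inE (negbTE aI) (negbTE aX) (negbTE aD).
have lt : #|M1 :&: D| < k0.
  rewrite -kI; apply: proper_card; apply/properP; split.
    by apply/subsetP => x; rewrite /M1 /mix1 !inE; case: (x \in D); case: (x \in I); case: (x \in X).
  by exists b; rewrite /M1 /mix1 !inE ?bI ?bD ?(negbTE bX) //= andbF.
have Pm : P #|M1 :&: D| by apply/existsP; exists M1; rewrite tM1 aM1 eqxx.
have := kmin _ Pm; lia.
Qed.

Lemma gen (V : finType) (n : nat) : forall (e : rel V) (f : V -> nat) (D : {set V}),
  E2 e setT < n -> symmetric e -> irreflexive e -> good e f D -> sol e f D.
Proof.
elim: n => [|n IH] e f D; first by [].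
move=> hn sy ir g.
have neq : forall a b, e a b -> a != b.
  by move=> a b eab; apply: contraTneq eab => ->; rewrite ir.
have dstep : forall a b, e a b -> E2 (remE e a b) setT < n.
  move=> a b eab; have := E2_rem setT sy eab (neq a b eab); rewrite !inE /=; lia.
have IH' : forall a b f', e a b -> good (remE e a b) f' D -> sol (remE e a b) f' D.
  move=> a b f' eab g'; apply: IH => //; [exact: dstep | exact: remE_sym | exact: remE_irr].
case: (boolP [exists a, exists b, [&& e a b, a \in D & b \in D]]) => [c1|c1].
  move/existsP: c1 => [a /existsP[b /and3P[eab aD bD]]].
  apply: (@sol_del _ e f D a b); apply: IH' => //.
  by apply: good_del => //; [exact: neq | left; rewrite aD bD].
have hB : forall x y, e x y -> x \in D -> y \in D -> False.
  move=> x y exy xD yD; move/negP: c1; apply; apply/existsP; exists x; apply/existsP; exists y.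
  by rewrite exy xD yD.
case: (boolP [exists a, exists b, e a b && (f a == 0)]) => [c2|c2].
  move/existsP: c2 => [a /existsP[b /andP[eab /eqP fa]]].
  apply: (@sol_del _ e f D a b); apply: IH' => //.
  apply: good_del => //; first exact: neq.
  right; split=> //; apply/negP => /andP[aD bD]; exact: (hB a b).
have fpos : forall x y, e x y -> 0 < f x.
  move=> x y exy; rewrite lt0n; apply/negP => /eqP fx0; move/negP: c2; apply.
  by apply/existsP; exists x; apply/existsP; exists y; rewrite exy fx0.
case: (boolP [exists a, exists b, [&& e a b, a \notin D & b \notin D]]) => [c3|c3].
  move/existsP: c3 => [a /existsP[b /and3P[eab aD bD]]].
  have fa := fpos a b eab; have fb : 0 < f b by apply: (fpos b a); rewrite sy.
  apply: (@sol_use _ e f D a b) => //; first exact: neq.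
  apply: IH' => //; apply: good_use => //; first exact: neq.
  by rewrite (negbTE bD).
have hC : forall x y, e x y -> x \notin D -> y \notin D -> False.
  move=> x y exy xD yD; move/negP: c3; apply; apply/existsP; exists x; apply/existsP; exists y.
  by rewrite exy xD yD.
case: (boolP [exists a, exists b, e a b]) => [c4|c4]; last first.
  apply: sol_noedge => // x y; apply/negP => exy; move/negP: c4; apply.
  by apply/existsP; exists x; apply/existsP; exists y.
have [a [b0 [eab0 aD]]] : exists a b0, e a b0 /\ a \notin D.
  move/existsP: c4 => [a0 /existsP[b1 e01]].
  case a0D: (a0 \in D).
    exists b1, a0; split; first by rewrite sy.
    apply/negP => b1D; exact: (hB a0 b1).
  by exists a0, b1; rewrite a0D.
have fa := fpos a b0 eab0.
have [b [eab bD tight]] := keyE sy ir g hB hC fa aD eab0.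
have fb : 0 < f b by apply: (fpos b a); rewrite sy.
apply: (@sol_use _ e f D a b) => //; first exact: neq.
apply: IH' => //; apply: good_use => //; first exact: neq.
Qed.

Lemma FF_const (V : finType) (k : nat) (X : {set V}) : FF (fun _ => k) X = k * #|X|.
Proof.
rewrite /FF mulnC -sum_nat_const [RHS]big_mkcond /=; apply: eq_bigr => x _.
by case: (x \in X) => /=; rewrite ?mul1n ?mul0n.
Qed.

Theorem mainTheorem11 (V : finType) (e : rel V) (k : nat) (D : {set V}) :
  simple_graph e -> 1 <= k -> k_optimal e k D ->
  exists m : rel V,
    subgraph m e /\
    (forall v : V, deg m v <= k) /\
    (forall v : V, v \notin D -> deg m v = k).
Proof.
move=> [sy ir] _ [_ opt].
have g : good e (fun _ => k) D.
  move=> X; have := opt X; rewrite /phi !FF_const !E2_bridge //.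
  move=> h; have : ((k * #|X|)%:Z - (#|induced_edges e X|)%:Z <= (k * #|D|)%:Z - (#|induced_edges e D|)%:Z)%R by [].
  lia.
have [m [sm [sub [h1 h2]]]] := gen (n := (E2 e setT).+1) (ltnSn _) sy ir g.
by exists m; split.
Qed.
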